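(* Let $E$ be a Banach lattice with the property (d), and let $A \subset E$. Then $|A| = \{|x| : x \in A\}$ is an almost Grothendieck set if and only if the solid hull $\mathrm{sol}(A)$ is an almost Grothendieck set.
   Context: Every bounded linear operator $T: E \to c_0$ on a Banach lattice $E$ is of the form $T(x) = (x_n'(x))_n$ for a unique weak* null sequence $(x_n') \subset E'$; $T$ is a disjoint operator if $(x_n')$ is a disjoint sequence in the dual Banach lattice $E'$. A subset $A \subset E$ is almost Grothendieck if $T(A)$ is relatively weakly compact in $c_0$ for every disjoint operator $T: E \to c_0$. $E$ has the property (d) if $|x_n'| \to 0$ weak* in $E'$ for every disjoint weak* null sequence $(x_n')$ in $E'$. The solid hull is $\mathrm{sol}(A) = \{x \in E : |x| \le |y| \text{ for some } y \in A\}$. *)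

(* Defs.v *)
From HB Require Import structures.
From mathcomp Require Import all_boot all_order all_algebra.
From mathcomp Require Import all_classical all_reals all_analysis.
Set Implicit Arguments. Unset Strict Implicit. Unset Printing Implicit Defensive.
Import Order.TTheory GRing.Theory Num.Theory.
Import numFieldNormedType.Exports.
Local Open Scope classical_set_scope.
Local Open Scope ring_scope.

(* A (real) Banach lattice: a complete normed space E (the carrier is a
   completeNormedModType R) together with a partial order [ble] that is a
   vector-space order, admits binary suprema [bjoin], and is compatible with the
   norm: |x| <= |y| implies ||x|| <= ||y||, where |x| = x \/ -x. *)
Record BLat (R : realType) (E : completeNormedModType R) := MkBLat {
  ble : E -> E -> Prop;
  bjoin : E -> E -> E;
  ble_refl : forall x, ble x x;
  ble_trans : forall x y z, ble x y -> ble y z -> ble x z;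
  ble_anti : forall x y, ble x y -> ble y x -> x = y;
  ble_add : forall x y z, ble x y -> ble (x + z) (y + z);
  ble_scale : forall (a : R) x y, 0 <= a -> ble x y -> ble (a *: x) (a *: y);
  bjoin_ubl : forall x y, ble x (bjoin x y);
  bjoin_ubr : forall x y, ble y (bjoin x y);
  bjoin_lub : forall x y z, ble x z -> ble y z -> ble (bjoin x y) z;
  bnorm_mono : forall x y, ble (bjoin x (- x)) (bjoin y (- y)) -> `|x| <= `|y|
}.

Section BanachLatticeNotions.
Variables (R : realType) (E : completeNormedModType R) (L : BLat E).

Definition babs (x : E) : E := bjoin L x (- x).

Definition sol (A : set E) : set E :=
  [set x | exists2 y, A y & ble L (babs x) (babs y)].

Definition is_dual (f : E -> R) : Prop :=
  (forall (a : R) (x y : E), f (a *: x + y) = a * f x + f y) /\ continuous f.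

Definition dle (f g : E -> R) : Prop := forall x, ble L 0 x -> f x <= g x.

Definition is_dabs (f h : E -> R) : Prop :=
  [/\ is_dual h, dle f h, dle (fun x => - f x) h &
      forall k, is_dual k -> dle f k -> dle (fun x => - f x) k -> dle h k].

(* f and g are disjoint in E': |f| /\ |g| = 0 in E' *)
Definition ddisjoint (f g : E -> R) : Prop :=
  exists hf hg, [/\ is_dabs f hf, is_dabs g hg &
     forall k, is_dual k -> dle k hf -> dle k hg -> dle k (fun _ => 0)].

Definition weak_star_null (xs : nat -> E -> R) : Prop :=
  forall x, (fun n => xs n x) @ \oo --> (0 : R).

Definition disjoint_seq (xs : nat -> E -> R) : Prop :=
  forall n m : nat, n <> m -> ddisjoint (xs n) (xs m).

End BanachLatticeNotions.

Section C0.
Variable R : realType.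

Definition c0set : set (nat -> R) := [set u | u @ \oo --> (0 : R)].

(* the index set of l1 = (c0)' *)
Definition l1 := {a : nat -> R | cvgn (series (fun n => `|a n|))}.

(* the duality pairing <a, u> = sum_n a_n u_n (genuine for u in c0) *)
Definition c0_pairing (u : nat -> R) : {ptws l1 -> R} :=
  fun a => limn (series (fun n => proj1_sig a n * u n)).

(* nat -> R with the initial topology induced by the pairings with l1; its
   subspace topology on c0 is exactly the weak topology sigma(c0, l1) of c0. *)
Definition c0weak := initial_topology c0_pairing.

(* B is a relatively weakly compact subset of c0: B is contained in a weakly
   compact subset of c0 (the weak topology being Hausdorff, this is the same as
   having weakly compact weak closure). *)
Definition rel_weakly_compact_c0 (B : set (nat -> R)) : Prop :=
  exists K : set c0weak, [/\ K `<=` c0set, compact K & B `<=` K].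

End C0.

Section AlmostGrothendieck.
Variables (R : realType) (E : completeNormedModType R) (L : BLat E).

(* Disjoint operators T : E -> c0 are exactly T x = (x_n'(x))_n for a disjoint
   weak* null sequence (x_n') in E'. *)
Definition almost_grothendieck (A : set E) : Prop :=
  forall xs : nat -> E -> R,
    (forall n, is_dual (xs n)) -> weak_star_null xs -> disjoint_seq L xs ->
    rel_weakly_compact_c0 [set (fun n => xs n x) | x in A].

Definition property_d : Prop :=
  forall xs : nat -> E -> R,
    (forall n, is_dual (xs n)) -> weak_star_null xs -> disjoint_seq L xs ->
    forall hs : nat -> E -> R, (forall n, is_dabs L (xs n) (hs n)) ->
    weak_star_null hs.

End AlmostGrothendieck.

(* Main.v *)
Require Import Defs.
From HB Require Import structures.
From mathcomp Require Import all_boot all_order all_algebra.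
From mathcomp Require Import all_classical all_reals all_analysis.
Import Order.TTheory GRing.Theory Num.Theory.
Import numFieldNormedType.Exports.
Local Open Scope classical_set_scope.
Local Open Scope ring_scope.
Set Implicit Arguments. Unset Strict Implicit. Unset Printing Implicit Defensive.
From mathcomp Require Import lra ring.
Section PartA.
Variables (R : realType) (E : completeNormedModType R) (L : BLat E).

Lemma dualD (f : E -> R) (x y : E) : is_dual f -> f (x + y) = f x + f y.
Proof. by case=> hl _; have := hl 1 x y; rewrite scale1r mul1r. Qed.

Lemma dual0 (f : E -> R) : is_dual f -> f 0 = 0.
Proof.
move=> hf; have := dualD 0 0 hf; rewrite addr0 => h; lra.
Qed.

Lemma dualZ (f : E -> R) (a : R) (x : E) : is_dual f -> f (a *: x) = a * f x.
Proof. by move=> hf; case: (hf) => hl _; have := hl a x 0; rewrite addr0 dual0 // addr0. Qed.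

Lemma dualB (f : E -> R) (x y : E) : is_dual f -> f (x - y) = f x - f y.
Proof. by move=> hf; rewrite dualD // -scaleN1r dualZ // mulN1r. Qed.

Lemma dualN (f : E -> R) (x : E) : is_dual f -> f (- x) = - f x.
Proof. by move=> hf; rewrite -scaleN1r dualZ // mulN1r. Qed.

Lemma ble_sub0 (x y : E) : ble L x y -> ble L 0 (y - x).
Proof. by move=> h; have := ble_add (- x) h; rewrite subrr. Qed.

Lemma babs_pos1 (x : E) : ble L 0 (babs L x + x).
Proof.
have := ble_add x (bjoin_ubr L x (- x)); rewrite addNr; exact.
Qed.

Lemma babs_pos2 (x : E) : ble L 0 (babs L x - x).
Proof. exact/ble_sub0/bjoin_ubl. Qed.

Lemma babs_ge0 (x : E) : ble L 0 (babs L x).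
Proof.
have h1 := babs_pos1 x; have h2 := babs_pos2 x.
have := ble_add (babs L x - x) h1; rewrite add0r => h3.
have h4 := ble_trans h2 h3.
have -> : babs L x = (2^-1 : R) *: (babs L x + x + (babs L x - x)).
  rewrite addrACA subrr addr0 -mulr2n -scalerMnr scalerMnl -mulr_natr.
  by rewrite mulVf ?scale1r // pnatr_eq0.
have := ble_scale (a := (2^-1 : R)) _ h4; rewrite scaler0; apply.
by rewrite invr_ge0 ler0n.
Qed.

Lemma dabs_ge0 (f h : E -> R) (z : E) : is_dabs L f h -> ble L 0 z -> 0 <= h z.
Proof.
case=> _ h1 h2 _ hz; have := h1 z hz; have := h2 z hz => /= a b; lra.
Qed.

Lemma key_ineq (f h : E -> R) (x : E) : is_dual f -> is_dabs L f h -> `|f x| <= h (babs L x).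
Proof.
move=> hf hh; case: (hh) => hd h1 h2 _.
have p1 := babs_pos1 x; have p2 := babs_pos2 x.
have a1 := h1 _ p1; have a2 := h1 _ p2; have a3 := h2 _ p1; have a4 := h2 _ p2.
move: a1 a2 a3 a4 => /=; rewrite !dualD // !dualN //.
move=> a1 a2 a3 a4; rewrite ler_norml; apply/andP; split; lra.
Qed.

Lemma dabs_mono (f h : E -> R) (x y : E) : is_dabs L f h -> ble L (babs L x) (babs L y) ->
  h (babs L x) <= h (babs L y).
Proof.
move=> hh /ble_sub0 hxy; have := dabs_ge0 hh hxy.
case: hh => hd _ _ _; rewrite dualB //; lra.
Qed.

Lemma dabs_self (f h : E -> R) : is_dabs L f h -> is_dabs L h h.
Proof.
move=> hh; case: (hh) => hd _ _ _; split.
- done.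
- by move=> z _.
- by move=> z hz /=; have := dabs_ge0 hh hz; lra.
- by move=> k _ H _.
Qed.

Lemma dabs_least (f h h' : E -> R) : is_dabs L f h -> is_dabs L f h' -> dle L h h'.
Proof. by case=> _ _ _ hl; case=> hd' a b _; apply: hl. Qed.

Lemma dle_trans (f g k : E -> R) : dle L f g -> dle L g k -> dle L f k.
Proof. by move=> a b z hz; apply: le_trans (a z hz) (b z hz). Qed.

Lemma babs_babs (x : E) : ble L (babs L (babs L x)) (babs L x).
Proof.
apply: bjoin_lub; first exact: ble_refl.
have := ble_add (- babs L x) (babs_ge0 x); rewrite add0r subrr => h1.
exact: ble_trans h1 (babs_ge0 x).
Qed.
End PartA.
Lemma ultra_fmap_cvg (T : Type) (U : topologicalType) (f : T -> U)
  (F : set_system T) (UF : UltraFilter F) (p : U) :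
  cluster (f @ F) p -> f @ F --> p.
Proof.
move=> cl N Np.
have [//|Fc] := in_ultra_setVsetC (f @^-1` N) UF.
have [x [nx Nx]] := cl (~` N) N Fc Np.
by exfalso; apply: nx.
Qed.

Lemma initial_cvgP (S : choiceType) (T : topologicalType) (f : S -> T)
  (F : set_system S) (FF : Filter F) (s : S) :
  F --> (s : initial_topology f) <-> f @ F --> f s.
Proof.
split.
- move=> h A nA; apply: h.
  exact: (@initial_continuous S T f s _ nA).
- move=> h A /=; rewrite nbhsE => -[B [[C Cop <-] Cs] BA].
  have : (f @ F) C by apply: h; apply: open_nbhs_nbhs.
  by move=> /= FC; apply: filterS FC.
Qed.
Lemma ptws_cvgP (R : realType) (I : Type) (F : set_system (I -> R)) (FF : Filter F) (f : I -> R) :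
  F --> (f : {ptws I -> R}) <-> forall i, (fun g => g i) @ F --> f i.
Proof.
have E := @cvg_sup (I -> R) I (fun i => Topological.class (initial_topology (fun f : I -> R => f i))) F f FF.
split.
- move=> /E h i; apply/(@initial_cvgP (I -> R) R (fun g => g i) F FF f).
  exact: h.
- move=> h; apply/E => i.
  apply/(@initial_cvgP (I -> R) R (fun g => g i) F FF f).
  exact: h.
Qed.
Section Seqs.
Variable R : realType.
Implicit Types (u b x g : nat -> R).

Lemma near_inftyP (P : nat -> Prop) N :
  (forall n, (N <= n)%N -> P n) -> \forall n \near \oo, P n.
Proof. by move=> h; apply: filterS h (nbhs_infty_ge N). Qed.

Lemma near_inftyE (P : nat -> Prop) :
  (\forall n \near \oo, P n) -> exists N, forall n, (N <= n)%N -> P n.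
Proof. by case=> N _ hN; exists N. Qed.

Lemma c0_bounded u : @c0set R u -> exists M, forall n, `|u n| <= M.
Proof.
move=> h; have : cvgn u by apply/cvg_ex; exists 0.
move/cvg_seq_bounded => [M [Mreal]] /(_ (`|M| + 1)).
rewrite (le_lt_trans (ler_norm _)) ?ltrDl // => /(_ erefl) aM.
by exists (`|M| + 1) => n; exact: aM.
Qed.

Lemma AS_mul b x M : cvgn (series (fun n => `|b n|)) -> (forall n, `|x n| <= M) ->
  cvgn (series (fun n => `|b n * x n|)) /\ cvgn (series (fun n => b n * x n)).
Proof.
move=> hb hx.
have h : cvgn (series (fun n => `|b n * x n|)).
  apply: (@series_le_cvg R _ (M *: (fun n => `|b n|))).
  - by move=> n.
  - move=> n /=; apply: mulr_ge0 => //; exact: le_trans (hx n).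
  - by move=> n /=; rewrite normrM mulrC; apply: ler_wpM2r.
  - exact: is_cvg_seriesZ.
by split => //; apply: normed_cvg.
Qed.

Lemma tail_sum g N M : (N <= M)%N ->
  series (fun n => if (N <= n)%N then g n else 0) M = \sum_(N <= k < M) g k.
Proof.
move=> NM; rewrite /series /= (@big_cat_nat _ _ _ N 0 M) // /=.
rewrite big_nat big1 ?add0r; last by move=> k /andP[_ kN]; rewrite leqNgt kN.
by apply: eq_big_nat => k /andP[Nk _]; rewrite Nk.
Qed.

Lemma series_split g N M : (N <= M)%N ->
  series g M = series g N + \sum_(N <= k < M) g k.
Proof. by move=> NM; rewrite /series /= (@big_cat_nat _ _ _ N 0 M) //. Qed.

Lemma unit_series (n : nat) (c : R) N :
  series (fun k => if k == n then c else 0) N = if (n < N)%N then c else 0.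
Proof.
elim: N => [|N IH]; first by rewrite /series /= big_geq.
rewrite seriesSr IH /= ltnS [N == n]eq_sym.
by case: (ltngtP n N) => h; rewrite ?addr0 ?add0r.
Qed.

Lemma unit_cvgto (n : nat) (c : R) :
  series (fun k => if k == n then c else 0) @ \oo --> c.
Proof.
apply: cvg_near_cst; apply: (near_inftyP (N := n.+1)) => N hN.
by rewrite unit_series hN.
Qed.

Lemma unit_lim (n : nat) (c : R) :
  limn (series (fun k => if k == n then c else 0)) = c.
Proof. by apply: cvg_lim; [exact: norm_hausdorff | exact: unit_cvgto]. Qed.

Lemma unit_cvg (n : nat) (c : R) :
  cvgn (series (fun k => if k == n then c else 0)).
Proof. by apply/cvg_ex; exists c; exact: unit_cvgto. Qed.

End Seqs.
Section Est.
Variable R : realType.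

Lemma c0weak_cvgP (F : set_system (nat -> R)) (FF : Filter F) (w : nat -> R) :
  F --> (w : c0weak R) <->
  forall a : l1 R, (fun v => c0_pairing v a) @ F --> c0_pairing w a.
Proof.
rewrite /c0weak.
apply: (iff_trans (@initial_cvgP (nat -> R) {ptws l1 R -> R} (@c0_pairing R) F FF w)).
exact (@ptws_cvgP R (l1 R) (fmap (@c0_pairing R) F) (fmap_filter _ _) (c0_pairing w)).
Qed.

Lemma fin_cvg (F : set_system (nat -> R)) (FF : Filter F) (a w : nat -> R) :
  (forall n, (fun v => v n) @ F --> w n) ->
  forall N, (fun v => series (fun n => a n * (v n - w n)) N) @ F --> 0.
Proof.
move=> h; elim => [|N IH].
  by apply: cvg_near_cst; apply: nearW => v; rewrite /series /= big_geq.
have -> : (fun v => series (fun n => a n * (v n - w n)) N.+1) =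
   (fun v => series (fun n => a n * (v n - w n)) N + a N * (v N - w N)).
  by apply: funext => v; rewrite seriesSr.
rewrite -[0]addr0; apply: cvgD => //.
rewrite -(mulr0 (a N)); apply: cvgM; first exact: cvg_cst.
rewrite -(subrr (w N)); apply: cvgB => //; exact: cvg_cst.
Qed.

Lemma partial_ineq (a v w Uv u0 : nat -> R) N M : (N <= M)%N ->
  (forall n, `|v n| <= Uv n) -> (forall n, `|w n| <= u0 n) ->
  `|series (fun n => a n * w n) M - series (fun n => a n * v n) M| <=
  `|series (fun n => a n * (v n - w n)) N|
  + series (fun n => (if (N <= n)%N then `|a n| else 0) * Uv n) M
  + series (fun n => (if (N <= n)%N then `|a n| else 0) * u0 n) M.
Proof.
move=> NM hv hw.
have -> : series (fun n => a n * w n) M - series (fun n => a n * v n) M =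
   - series (fun n => a n * (v n - w n)) M.
  rewrite /series /= -sumrB -sumrN; apply: eq_bigr => k _; ring.
rewrite normrN (series_split _ NM) -addrA.
apply: le_trans (ler_normD _ _) _; rewrite lerD2l.
have E1 : forall g : nat -> R, series (fun n => (if (N <= n)%N then `|a n| else 0) * g n) M
   = \sum_(N <= k < M) `|a k| * g k.
  move=> g; rewrite -tail_sum //; rewrite /series /=; apply: eq_bigr => k _.
  by case: ifP => _; rewrite ?mul0r.
rewrite !E1 -big_split /=.
apply: le_trans (ler_norm_sum _ _ _) _; apply: ler_sum => k _.
rewrite normrM -mulrDr; apply: ler_wpM2l => //.
apply: le_trans (ler_normB _ _) _; exact: lerD.
Qed.

End Est.
Section Est2.
Variable R : realType.

Lemma est (F : set_system (nat -> R)) (PF : ProperFilter F)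
  (U : (nat -> R) -> nat -> R) (u0 w a : nat -> R) :
  cvgn (series (fun n => `|a n|)) ->
  @c0set R u0 -> (forall n, `|w n| <= u0 n) ->
  (\forall v \near F, @c0set R v /\ @c0set R (U v) /\ forall n, `|v n| <= U v n) ->
  (forall n, (fun v => v n) @ F --> w n) ->
  (forall b : nat -> R, cvgn (series (fun n => `|b n|)) ->
     (fun v => limn (series (fun n => b n * U v n))) @ F -->
        limn (series (fun n => b n * u0 n))) ->
  (fun v => limn (series (fun n => a n * v n))) @ F -->
     limn (series (fun n => a n * w n)).
Proof.
move=> ha hu0 hw hF hcoord hweak.
have [Mu hMu] := c0_bounded hu0.
have hMw : forall n, `|w n| <= Mu.
  by move=> n; apply: le_trans (hw n) (le_trans (ler_norm _) (hMu n)).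
have ha' : cvgn (series (fun n => `| `|a n| |)).
  by have -> : (fun n => `| `|a n| |) = (fun n => `|a n|) by apply: funext => n; rewrite normr_id.
have hc : cvgn (series (fun n => `|a n| * u0 n)) := (AS_mul ha' hMu).2.
apply/cvgrPdist_le => e e0.
have e'0 : 0 < e / 6 by apply: divr_gt0.
have [N hN] : exists N, forall M, (N <= M)%N ->
    `|limn (series (fun n => `|a n| * u0 n)) - series (fun n => `|a n| * u0 n) M| <= e / 6.
  by apply: near_inftyE; move/cvgrPdist_le : hc => /(_ (e / 6) e'0).
pose bN := fun n => if (N <= n)%N then `|a n| else 0.
have hbN : cvgn (series (fun n => `|bN n|)).
  apply: (@series_le_cvg R _ (fun n => `|a n|)) => // n.
  by rewrite /bN; case: ifP => _; rewrite ?normr_id ?normr0.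
have cbu := (AS_mul hbN hMu).2.
have tailc : limn (series (fun n => bN n * u0 n)) <= 2 * (e / 6).
  apply: limr_le => //; apply: (near_inftyP (N := N)) => M NM.
  have -> : series (fun n => bN n * u0 n) M = \sum_(N <= k < M) (`|a k| * u0 k).
    rewrite -tail_sum // /series /=; apply: eq_bigr => k _.
    by rewrite /bN; case: ifP => _; rewrite ?mul0r.
  have := series_split (fun n => `|a n| * u0 n) NM.
  have := hN M NM; have := hN N (leqnn N).
  rewrite !ler_norml => /andP[h1 h2] /andP[h3 h4] h5; lra.
have H1 := (cvgrPdist_le _ _).1 (hweak bN hbN) _ e'0.
have H2 := (cvgrPdist_le _ _).1 (fin_cvg _ a hcoord N) _ e'0.
have FF : Filter F by typeclasses eauto.
have {}H1 := H1 FF.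
have {}H2 := H2 FF FF.
apply: filterS3 hF H1 H2 => v [hv [hUv hvU]] h1 h2.
have [Mv hMv] := c0_bounded hv.
have [MU hMU] := c0_bounded hUv.
have cav := (AS_mul ha hMv).2.
have caw := (AS_mul ha hMw).2.
have cbU := (AS_mul hbN hMU).2.
have key : `|limn (series (fun n => a n * w n)) - limn (series (fun n => a n * v n))|
   - limn (series (fun n => bN n * U v n)) - limn (series (fun n => bN n * u0 n))
   <= `|series (fun n => a n * (v n - w n)) N|.
  apply: (cvgr_to_le (F := \oo)
    (f := fun M => `|series (fun n => a n * w n) M - series (fun n => a n * v n) M|
       - series (fun n => bN n * U v n) M - series (fun n => bN n * u0 n) M)).
    by apply: cvgB; [apply: cvgB; [apply: cvg_norm; apply: cvgB|]|].
  apply: (near_inftyP (N := N)) => M NM.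
  have := partial_ineq a NM hvU hw; rewrite -/bN; lra.
move: h1 h2 key; rewrite sub0r normrN ler_norml => /andP[h1 h1'] h2 key.
lra.
Qed.

End Est2.
Definition solidc (R : realType) (K : set (nat -> R)) : set (nat -> R) :=
  [set v | @c0set R v /\ exists2 u, K u & forall n, `|v n| <= u n].

Lemma solid_compact (R : realType) (K : set (c0weak R)) :
  K `<=` @c0set R -> compact K -> compact (solidc K : set (c0weak R)).
Proof.
move=> K0 cK; rewrite compact_ultra => F UF FK'.
have : forall v : nat -> R, exists u : nat -> R,
    solidc K v -> K u /\ forall n, `|v n| <= u n.
  move=> v; case: (pselect (solidc K v)) => [[_ [u Ku hu]]|nv].
    by exists u.
  by exists v.
move/choice => [U hU].
have FU : F (U @^-1` K).
  by apply: (filterS _ FK'); move=> v Kv; exact: (hU v Kv).1.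
have [u0 [Ku0 clu0]] := cK (U @ F) _ FU.
have cvU : U @ F --> (u0 : c0weak R) := ultra_fmap_cvg UF clu0.
have hu0 : @c0set R u0 := K0 _ Ku0.
have hweak : forall a : l1 R,
    (fun v => c0_pairing (U v) a) @ F --> c0_pairing u0 a.
  by move=> a; exact: ((c0weak_cvgP _ u0).1 cvU a).
have hUn : forall n, (fun v => U v n) @ F --> u0 n.
  move=> n; pose en := fun k => if k == n then (1:R) else 0.
  have hen : cvgn (series (fun k => `|en k|)).
    have -> : (fun k => `|en k|) = en.
      by apply: funext => k; rewrite /en; case: eqP => _; rewrite ?normr1 ?normr0.
    exact: unit_cvg.
  have E : forall u : nat -> R, c0_pairing u (exist _ en hen) = u n.
    move=> u; rewrite /c0_pairing /=.
    have -> : (fun k => en k * u k) = (fun k => if k == n then u n else 0).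
      by apply: funext => k; rewrite /en; case: eqP => [->|_]; rewrite ?mul1r ?mul0r.
    exact: unit_lim.
  have := hweak (exist _ en hen).
  have -> : (fun v => c0_pairing (U v) (exist _ en hen)) = (fun v => U v n).
    by apply: funext => v; exact: E.
  by rewrite E.
have hw : forall n, exists wn, (fun v => v n) @ F --> wn /\ `|wn| <= u0 n.
  move=> n.
  have near1 := (cvgrPdist_le _ _).1 (hUn n) _ ltr01.
  have FF : Filter F by typeclasses eauto.
  have {}near1 := near1 FF.
  have Fseg : ((fun v => v n) @ F) `[- (u0 n + 1), u0 n + 1]%classic.
    apply: filterS2 FK' near1 => v Kv h1; have [_ hvU] := hU v Kv.
    have := hvU n; move: h1; rewrite /= in_itv /= ler_norml => /andP[h1 h2].
    rewrite ler_norml => /andP[h3 h4]; apply/andP; split; lra.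
  have [wn [Iw clw]] := segment_compact _ Fseg.
  exists wn; split; first exact: (@ultra_fmap_cvg (nat -> R) R (fun v => v n) F UF wn clw).
  have cvn : (fun v => v n) @ F --> wn := (@ultra_fmap_cvg (nat -> R) R (fun v => v n) F UF wn clw).
  have : `|wn| - u0 n <= 0.
    apply: (cvgr_to_le (F := F) (f := fun v => `|v n| - U v n)).
      exact: cvgB (cvg_norm cvn) (hUn n).
    apply: (filterS _ FK') => v Kv; have [_ hvU] := hU v Kv.
    by have := hvU n; rewrite /= subr_le0.
  lra.
move/choice: hw => [w hw'].
have hwb : forall n, `|w n| <= u0 n by move=> n; exact: (hw' n).2.
have hwc : forall n, (fun v => v n) @ F --> w n by move=> n; exact: (hw' n).1.
exists w; split.
- split; last by exists u0.
  apply/cvgrPdist_le => e e0; move/cvgrPdist_le : hu0 => /(_ e e0).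
  apply: filterS => k; rewrite !sub0r !normrN => h; apply: le_trans h.
  exact: le_trans (hwb k) (ler_norm _).
- apply/c0weak_cvgP => -[a ha] /=; rewrite /c0_pairing /=.
  apply: (@est R F _ U u0 w a) => //.
  + apply: (filterS _ FK') => v Kv; have [KU hvU] := hU v Kv.
    by split; [exact: Kv.1 | split; [exact: K0 | exact: hvU]].
  + by move=> b hb; exact: (hweak (exist _ b hb)).
Qed.
Theorem mainTheorem2 (R : realType) (E : completeNormedModType R) (L : BLat E)
  (hd : property_d L) (A : set E) :
  almost_grothendieck L (babs L @` A) <-> almost_grothendieck L (sol L A).
Proof.
split.
- move=> hb xs hdual hwsn hdisj.
  have : forall n, exists h, is_dabs L (xs n) h.
    move=> n; have [hf [hg [a _ _]]] := hdisj n n.+1 (@n_Sn n).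
    by exists hf.
  move/choice => [hs hhs].
  have hsd : forall n, is_dual (hs n) by move=> n; case: (hhs n).
  have hsw : weak_star_null hs := hd xs hdual hwsn hdisj hs hhs.
  have hsdisj : disjoint_seq L hs.
    move=> n m nm; have [hf [hg [a b c]]] := hdisj n m nm.
    exists (hs n), (hs m); split; [exact: dabs_self (hhs n)|exact: dabs_self (hhs m)|].
    move=> k kd k1 k2; apply: c => //.
      exact: dle_trans k1 (dabs_least (hhs n) a).
    exact: dle_trans k2 (dabs_least (hhs m) b).
  have [K [K0 cK sub]] := hb hs hsd hsw hsdisj.
  exists (solidc K); split.
  + by move=> v [].
  + exact: solid_compact.
  + move=> _ [x [y Ay hxy] <-]; split; first exact: hwsn x.
    exists (fun n => hs n (babs L y)).
      by apply: sub; exists (babs L y) => //; exists y.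
    move=> n /=; apply: le_trans (key_ineq x (hdual n) (hhs n)) _.
    exact: dabs_mono (hhs n) hxy.
- move=> hsol xs hdual hwsn hdisj.
  have [K [K0 cK sub]] := hsol xs hdual hwsn hdisj.
  exists K; split => //; apply: subset_trans sub.
  move=> _ [x [y Ay <-] <-]; exists (babs L y) => //.
  by exists y => //; exact: babs_babs.
Qed.
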